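(* For all positive integers $m$, all real numbers $x_1,\dots,x_m,y_1,\dots,y_m\ge0$ and all real $d>1$, \[\max_{j\in\{1,\dots,m\}}\Big((d-1)x_j^{1/(d-1)}+\sum_{i=1}^j y_i\Big)\ \ge\ d\Big(\frac{1}{\mathrm{e}}\sum_{j=1}^m x_jy_j\Big)^{1/d}.\] *)

(* Defs.v *)
From Stdlib Require Import Reals Lra.
Open Scope R_scope.

(* Real power x^a for x >= 0 and a > 0, with the convention 0^a = 0
   (Stdlib's Rpower 0 a = exp (a * ln 0) = 1, which is wrong at 0). *)
Definition rpow (x a : R) : R :=
  if Req_EM_T x 0 then 0 else Rpower x a.

Fixpoint max_1_to (f : nat -> R) (m : nat) : R :=
  match m with
  | O => f 1%nat
  | S O => f 1%nat
  | S k => Rmax (max_1_to f k) (f m)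
  end.

Definition sum_1_to (g : nat -> R) (j : nat) : R :=
  sum_f 1 j g.

(* Main.v *)
Require Import Defs.
From Stdlib Require Import Reals.
From Stdlib Require Import Lra Lia Psatz.
Open Scope R_scope.

Lemma exp_le_mono x y : x <= y -> exp x <= exp y.
Proof. intros [H|H]; [left; apply exp_increasing; auto | subst; lra]. Qed.

Lemma exp_le_rev x y : exp x <= exp y -> x <= y.
Proof. intros H. destruct (Rle_or_lt x y) as [h|h]; auto.
  apply exp_increasing in h. lra. Qed.

Lemma ln_le_mono x y : 0 < x -> x <= y -> ln x <= ln y.
Proof. intros Hx [H|H]; [left; apply ln_increasing; auto | subst; lra]. Qed.

Lemma ln_le_minus1 x : 0 < x -> ln x <= x - 1.
Proof. intros Hx. pose proof (exp_ineq1_le (ln x)). rewrite exp_ln in H; lra. Qed.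

Lemma bern t d : 1 <= d -> d * exp t - (d - 1) <= exp (d * t).
Proof.
  intros Hd.
  pose proof (exp_ineq1_le ((d-1)*t)) as HF.
  pose proof (exp_ineq1_le (-t)) as HG.
  assert (HEG : exp t * exp (-t) = 1) by (rewrite <- exp_plus; replace (t + -t) with 0 by ring; apply exp_0).
  assert (Hsplit : exp (d*t) = exp t * exp ((d-1)*t)) by (rewrite <- exp_plus; f_equal; ring).
  assert (Hsum : d <= exp ((d-1)*t) + (d-1) * exp (-t)).
  { assert ((d-1)*(1 + -t) <= (d-1) * exp (-t)) by (apply Rmult_le_compat_l; lra). nra. }
  pose proof (exp_pos t).
  rewrite Hsplit.
  assert (exp t * d <= exp t * (exp ((d-1)*t) + (d-1) * exp (-t))) by (apply Rmult_le_compat_l; lra).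
  nra.
Qed.

Lemma bern2 v y a : 0 < v -> 0 <= y -> 0 <= a ->
  (a+1) * Rpower v a * y <= Rpower (v+y) (a+1) - Rpower v (a+1).
Proof.
  intros Hv Hy Ha. unfold Rpower.
  set (p := ln v). set (t := ln (v+y) - p).
  assert (Hvy : v + y = exp p * exp t).
  { rewrite <- exp_plus. unfold t, p. replace (ln v + (ln (v + y) - ln v)) with (ln (v+y)) by ring.
    rewrite exp_ln; lra. }
  assert (Hv' : v = exp p) by (unfold p; rewrite exp_ln; lra).
  assert (E1 : exp ((a+1) * ln (v+y)) = exp ((a+1)*p) * exp ((a+1)*t)).
  { rewrite <- exp_plus. f_equal. unfold t. fold p. ring. }
  assert (E2 : exp (a * p) * exp p = exp ((a+1)*p)) by (rewrite <- exp_plus; f_equal; ring).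
  rewrite E1. fold p.
  assert (Hy' : y = exp p * exp t - exp p) by lra.
  rewrite Hy'.
  pose proof (bern t (a+1) ltac:(lra)).
  pose proof (exp_pos ((a+1)*p)).
  replace ((a + 1) * exp (a * p) * (exp p * exp t - exp p)) with
    (exp ((a+1)*p) * ((a+1) * exp t - (a+1-1) - 1)) by (rewrite <- E2; ring).
  replace (exp ((a + 1) * p) * exp ((a + 1) * t) - exp ((a + 1) * p)) with
    (exp ((a+1)*p) * (exp ((a + 1) * t) - 1)) by ring.
  apply Rmult_le_compat_l; lra.
Qed.

Lemma rpow_0 a : rpow 0 a = 0.
Proof. unfold rpow. destruct (Req_EM_T 0 0); auto; lra. Qed.

Lemma rpow_pos x a : 0 < x -> rpow x a = Rpower x a.
Proof. intros H. unfold rpow. destruct (Req_EM_T x 0); auto; lra. Qed.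

Lemma rpow_nonneg x a : 0 <= rpow x a.
Proof. unfold rpow. destruct (Req_EM_T x 0); [lra|]. unfold Rpower. left; apply exp_pos. Qed.

Lemma rpow_mono v u c : 0 <= v -> v <= u -> 0 < c -> rpow v c <= rpow u c.
Proof.
  intros Hv Hvu Hc. destruct Hv as [Hv|Hv].
  - rewrite !rpow_pos by lra. apply Rle_Rpower_l; lra.
  - subst. rewrite rpow_0. apply rpow_nonneg.
Qed.

Lemma step x y s M a : 0 <= x -> 0 <= y -> 0 < a ->
  s + y + a * rpow x (1/a) <= M ->
  x * y * ((a+1) * Rpower a a) <= rpow (M - s) (a+1) - rpow (M - s - y) (a+1).
Proof.
  intros Hx Hy Ha H.
  pose proof (rpow_nonneg x (1/a)) as Hz.
  assert (0 <= a * rpow x (1/a)) by (apply Rmult_le_pos; lra).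
  set (v := M - s - y).
  assert (Hv : 0 <= v) by (unfold v; lra).
  replace (M - s) with (v + y) by (unfold v; ring).
  destruct Hx as [Hx|Hx].
  - rewrite rpow_pos in H, Hz by lra.
    set (z := Rpower x (1/a)) in *.
    assert (Hzp : 0 < z) by (unfold z, Rpower; apply exp_pos).
    assert (Haz : 0 < a * z) by (apply Rmult_lt_0_compat; lra).
    assert (Hvp : 0 < v) by (unfold v; lra).
    assert (Hxz : x = Rpower z a).
    { unfold z. rewrite Rpower_mult. replace (1/a*a) with 1 by (field; lra). rewrite Rpower_1; lra. }
    assert (Hpa : 0 < Rpower a a) by (unfold Rpower; apply exp_pos).
    assert (Hxa : x * Rpower a a <= Rpower v a).
    { rewrite Hxz, Rpower_mult_distr by lra. apply Rle_Rpower_l; [lra|]. split; [nra|]. unfold v. nra. }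
    rewrite !rpow_pos by lra.
    pose proof (bern2 v y a Hvp Hy ltac:(lra)).
    assert ((a+1)*y*(x*Rpower a a) <= (a+1)*y*Rpower v a) by (apply Rmult_le_compat_l; nra).
    nra.
  - subst x. replace (0 * y * ((a + 1) * Rpower a a)) with 0 by ring.
    assert (rpow v (a+1) <= rpow (v+y) (a+1)) by (apply rpow_mono; lra). lra.
Qed.

Lemma sum_1_to_S g j : (1 <= j)%nat -> sum_1_to g (S j) = sum_1_to g j + g (S j).
Proof.
  intros Hj. destruct j as [|j']; [lia|]. unfold sum_1_to, sum_f.
  replace (S (S j') - 1)%nat with (S j') by lia.
  replace (S j' - 1)%nat with j' by lia.
  simpl sum_f_R0 at 1. f_equal. f_equal. lia.
Qed.

Lemma sum_1_to_1 g : sum_1_to g 1 = g 1%nat.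
Proof. reflexivity. Qed.

Lemma sum_nonneg g j : (1 <= j)%nat -> (forall i, (1 <= i <= j)%nat -> 0 <= g i) -> 0 <= sum_1_to g j.
Proof.
  induction j as [|j IH]; intros Hj Hg; [lia|].
  destruct (Nat.eq_dec j 0) as [->|Hne].
  - rewrite sum_1_to_1. apply Hg; lia.
  - rewrite sum_1_to_S by lia. assert (0 <= g (S j)) by (apply Hg; lia).
    assert (0 <= sum_1_to g j) by (apply IH; [lia| intros; apply Hg; lia]). lra.
Qed.

Lemma max_ge f m j : (1 <= j <= m)%nat -> f j <= max_1_to f m.
Proof.
  induction m as [|m IH]; intros Hj; [lia|].
  destruct m as [|k].
  - replace j with 1%nat by lia. simpl. lra.
  - change (max_1_to f (S (S k))) with (Rmax (max_1_to f (S k)) (f (S (S k)))).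
    destruct (Nat.eq_dec j (S (S k))) as [->|Hne].
    + apply Rmax_r.
    + eapply Rle_trans; [apply IH; lia| apply Rmax_l].
Qed.

Lemma fin P M d : 1 < d -> 0 <= P -> 0 <= M ->
  P * (d * Rpower (d-1) (d-1)) <= rpow M d ->
  d * rpow (/ exp 1 * P) (1/d) <= M.
Proof.
  intros Hd HP HM H.
  set (a := d - 1) in *.
  assert (Ha : 0 < a) by (unfold a; lra).
  assert (HK : 0 < Rpower a a) by (unfold Rpower; apply exp_pos).
  destruct HP as [HP|HP]; [|subst P; rewrite Rmult_0_r, rpow_0; lra].
  destruct HM as [HM|HM].
  2:{ subst M. rewrite rpow_0 in H. assert (0 < P * (d * Rpower a a)) by
      (apply Rmult_lt_0_compat; [lra| apply Rmult_lt_0_compat; lra]). lra. }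
  pose proof (exp_pos 1) as He.
  assert (HeP : 0 < / exp 1 * P) by (apply Rmult_lt_0_compat; [apply Rinv_0_lt_compat|]; lra).
  rewrite rpow_pos in H by lra. rewrite rpow_pos by lra.
  assert (HlnP : ln P + ln d + a * ln a <= d * ln M).
  { apply ln_le_mono in H; [| apply Rmult_lt_0_compat; [lra | apply Rmult_lt_0_compat; lra]].
    rewrite !ln_mult in H by (try apply Rmult_lt_0_compat; lra).
    unfold Rpower in H. rewrite !ln_exp in H. lra. }
  assert (Hl : ln (/ exp 1 * P) = ln P - 1).
  { rewrite ln_mult by (try apply Rinv_0_lt_compat; lra). rewrite ln_Rinv by lra. rewrite ln_exp. ring. }
  assert (Hda : ln d = ln a + ln (d / a)).
  { rewrite <- ln_mult by (try (apply Rdiv_lt_0_compat); lra). f_equal. field. lra. }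
  pose proof (ln_le_minus1 (d / a) ltac:(apply Rdiv_lt_0_compat; lra)) as Hq.
  assert (Hq2 : a * ln (d/a) <= 1).
  { assert (a * ln (d/a) <= a * (d/a - 1)) by (apply Rmult_le_compat_l; lra).
    replace (a * (d/a - 1)) with 1 in H0 by (unfold a; field; lra). lra. }
  assert (Hkey : ln P - 1 <= d * (ln M - ln d)).
  { assert (a*ln d = a*ln a + a*ln(d/a)) by (rewrite Hda; ring).
    assert (d*ln d = a*ln d + ln d) by (unfold a; ring).
    assert (d*(ln M - ln d) = d * ln M - d * ln d) by ring. lra. }
  unfold Rpower. rewrite Hl.
  rewrite <- (exp_ln d) at 1 by lra. rewrite <- (exp_ln M) at 1 by lra.
  rewrite <- exp_plus. apply exp_le_mono.
  assert (1/d * (ln P - 1) <= 1/d * (d * (ln M - ln d))).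
  { apply Rmult_le_compat_l; [left; apply Rdiv_lt_0_compat|]; lra. }
  replace (1/d * (d * (ln M - ln d))) with (ln M - ln d) in H0 by (field; lra). lra.
Qed.

Theorem lemma3p9 (m : nat) (x y : nat -> R) (d : R) :
  (1 <= m)%nat ->
  (forall i, (1 <= i <= m)%nat -> 0 <= x i) ->
  (forall i, (1 <= i <= m)%nat -> 0 <= y i) ->
  1 < d ->
  max_1_to (fun j => (d - 1) * rpow (x j) (1 / (d - 1)) + sum_1_to y j) m
    >= d * rpow (/ exp 1 * sum_1_to (fun j => x j * y j) m) (1 / d).
Proof.
  intros Hm Hx Hy Hd.
  set (f := fun j => (d - 1) * rpow (x j) (1 / (d - 1)) + sum_1_to y j).
  set (M := max_1_to f m).
  assert (HM : forall j, (1 <= j <= m)%nat -> (d-1) * rpow (x j) (1/(d-1)) + sum_1_to y j <= M).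
  { intros j Hj. apply (max_ge f m j Hj). }
  assert (Hclaim : forall j, (1 <= j <= m)%nat ->
    sum_1_to (fun j => x j * y j) j * (d * Rpower (d-1) (d-1)) <= rpow M d - rpow (M - sum_1_to y j) d).
  { induction j as [|j IH]; intros Hj; [lia|].
    destruct (Nat.eq_dec j 0) as [->|Hne].
    - rewrite !sum_1_to_1.
      pose proof (step (x 1%nat) (y 1%nat) 0 M (d-1) ltac:(apply Hx; lia) ltac:(apply Hy; lia) ltac:(lra)) as Hs.
      replace (d - 1 + 1) with d in Hs by ring.
      rewrite !Rminus_0_r in Hs. apply Hs.
      pose proof (HM 1%nat ltac:(lia)). rewrite sum_1_to_1 in H. lra.
    - rewrite !sum_1_to_S by lia.
      pose proof (step (x (S j)) (y (S j)) (sum_1_to y j) M (d-1) ltac:(apply Hx; lia) ltac:(apply Hy; lia) ltac:(lra)) as Hs.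
      replace (d - 1 + 1) with d in Hs by ring.
      replace (M - (sum_1_to y j + y (S j))) with (M - sum_1_to y j - y (S j)) by ring.
      assert (Hs' : x (S j) * y (S j) * (d * Rpower (d - 1) (d - 1)) <=
        rpow (M - sum_1_to y j) d - rpow (M - sum_1_to y j - y (S j)) d).
      { apply Hs. pose proof (HM (S j) ltac:(lia)). rewrite sum_1_to_S in H by lia. lra. }
      pose proof (IH ltac:(lia)). lra. }
  pose proof (Hclaim m ltac:(lia)) as Hc.
  pose proof (rpow_nonneg (M - sum_1_to y m) d).
  assert (HP : 0 <= sum_1_to (fun j => x j * y j) m).
  { apply sum_nonneg; auto. intros i Hi. apply Rmult_le_pos; [apply Hx|apply Hy]; lia. }
  assert (HM0 : 0 <= M).
  { pose proof (HM 1%nat ltac:(lia)). rewrite sum_1_to_1 in H0.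
    pose proof (rpow_nonneg (x 1%nat) (1/(d-1))).
    assert (0 <= (d-1) * rpow (x 1%nat) (1/(d-1))) by (apply Rmult_le_pos; lra).
    pose proof (Hy 1%nat ltac:(lia)). lra. }
  apply Rle_ge. apply fin; auto. lra.
Qed.
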